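(* Suppose $G$ satisfies (H1) and let $\gamma(\cdot,t)$, $t\in[0,\omega)$, be the solution of $\partial_t\gamma=G(k)kN$ with smooth closed strictly convex initial curve, on its maximal interval, with $\lim_{t\to\omega}A(t)=0$. Then $$\liminf_{t\to\omega}\ L(t)\Big(\int_0^{L(t)}k^2\,ds-\frac{\pi L(t)}{A(t)}\Big)\le 0.$$
   Context: (H1): $G\in C^3(0,\infty)$, $G>0$ and $G'\ge 0$ on $(0,\infty)$. $k$ is the positive curvature, $N$ the unit inward normal, $s$ arc length, $L(t)$ the length and $A(t)>0$ the enclosed area of $\gamma(\cdot,t)$; $\omega<\infty$ is the maximal existence time. *)

(* Defs.v *)
From Stdlib Require Import Reals Lra Classical ClassicalEpsilon.
Open Scope R_scope.

(* The derivative of f at x (the unique l with derivable_pt_lim f x l),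
   or an arbitrary value if f is not differentiable at x. *)
Definition Dr (f : R -> R) (x : R) : R :=
  epsilon (inhabits 0) (fun l => derivable_pt_lim f x l).

(* Riemann integral of f over [a,b] (0 if f is not Riemann integrable). *)
Definition RInt (f : R -> R) (a b : R) : R :=
  match excluded_middle_informative (inhabited (Riemann_integrable f a b)) with
  | left H => RiemannInt (epsilon H (fun _ => True))
  | right _ => 0
  end.

Definition H1 (G : R -> R) : Prop :=
  exists G1 G2 G3 : R -> R,
    forall x, 0 < x ->
      derivable_pt_lim G x (G1 x) /\
      derivable_pt_lim G1 x (G2 x) /\
      derivable_pt_lim G2 x (G3 x) /\
      continuity_pt G3 x /\
      0 < G x /\ 0 <= G1 x.

Definition dt_within (w : R) (f : R -> R) (t l : R) : Prop :=
  forall eps, 0 < eps -> exists del, 0 < del /\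
    forall h, h <> 0 -> Rabs h < del -> 0 <= t + h < w ->
      Rabs ((f (t + h) - f t) / h - l) < eps.

Definition cont_within (w : R) (f : R -> R -> R) (u t : R) : Prop :=
  forall eps, 0 < eps -> exists del, 0 < del /\
    forall u' t', Rabs (u' - u) < del -> Rabs (t' - t) < del -> 0 <= t' < w ->
      Rabs (f u' t' - f u t) < eps.

(* f is C^infinity on R x [0,w): all mixed partial derivatives exist and are
   jointly continuous. *)
Definition smooth_flow (w : R) (f : R -> R -> R) : Prop :=
  exists D : nat -> nat -> R -> R -> R,
    (forall u t, 0 <= t < w -> D 0%nat 0%nat u t = f u t) /\
    (forall i j u t, 0 <= t < w ->
        derivable_pt_lim (fun v => D i j v t) u (D (S i) j u t)) /\
    (forall i j u t, 0 <= t < w ->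
        dt_within w (fun s => D i j u s) t (D i (S j) u t)) /\
    (forall i j u t, 0 <= t < w -> cont_within w (D i j) u t).

Section Geometry.
Variables gx gy : R -> R -> R.

Definition xu (u t : R) : R := Dr (fun v => gx v t) u.
Definition yu (u t : R) : R := Dr (fun v => gy v t) u.
Definition xuu (u t : R) : R := Dr (fun v => xu v t) u.
Definition yuu (u t : R) : R := Dr (fun v => yu v t) u.
Definition xt (u t : R) : R := Dr (fun s => gx u s) t.
Definition yt (u t : R) : R := Dr (fun s => gy u s) t.

Definition speed (u t : R) : R := sqrt (xu u t ^ 2 + yu u t ^ 2).

(* signed curvature; positive for a counterclockwise convex curve *)
Definition curv (u t : R) : R :=
  (xu u t * yuu u t - yu u t * xuu u t) / speed u t ^ 3.

(* normal N = J T (tangent rotated by +pi/2): the inward normal of a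
   counterclockwise (k > 0) convex curve *)
Definition Nx (u t : R) : R := - yu u t / speed u t.
Definition Ny (u t : R) : R := xu u t / speed u t.

Definition length (t : R) : R := RInt (fun u => speed u t) 0 1.
Definition area (t : R) : R :=
  / 2 * RInt (fun u => gx u t * yu u t - gy u t * xu u t) 0 1.
Definition int_k2 (t : R) : R := RInt (fun u => curv u t ^ 2 * speed u t) 0 1.

End Geometry.

Definition is_solution (G : R -> R) (w : R) (gx gy : R -> R -> R) : Prop :=
  0 < w /\
  smooth_flow w gx /\ smooth_flow w gy /\
  (forall u t, 0 <= t < w -> gx (u + 1) t = gx u t /\ gy (u + 1) t = gy u t) /\
  (forall u t, 0 <= t < w -> 0 < speed gx gy u t) /\
  (forall u t, 0 <= t < w -> 0 < curv gx gy u t) /\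
  (forall u t, 0 < t < w ->
     xt gx u t = G (curv gx gy u t) * curv gx gy u t * Nx gx gy u t /\
     yt gy u t = G (curv gx gy u t) * curv gx gy u t * Ny gx gy u t).

(* initial curve is strictly convex: k > 0 (in is_solution) and it winds once,
   i.e. total curvature 2 pi (so gamma(.,0) is a simple strictly convex curve) *)
Definition initial_strictly_convex (gx gy : R -> R -> R) : Prop :=
  (forall u, 0 < curv gx gy u 0) /\
  RInt (fun u => curv gx gy u 0 * speed gx gy u 0) 0 1 = 2 * PI.

Definition maximal_solution (G : R -> R) (w : R) (gx gy : R -> R -> R) : Prop :=
  forall w' gx' gy', w < w' -> is_solution G w' gx' gy' ->
    ~ (forall u t, 0 <= t < w -> gx' u t = gx u t /\ gy' u t = gy u t).

Definition liminf_left_le (F : R -> R) (w c : R) : Prop :=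
  forall eps del, 0 < eps -> 0 < del ->
    exists t, 0 <= t < w /\ w - del < t /\ F t < c + eps.

(* Main.v *)
From Stdlib Require Import Reals Lra Classical ClassicalEpsilon FunctionalExtensionality List.
Require Import Defs.
Open Scope R_scope.

Lemma Dr_eq (f : R -> R) x l : derivable_pt_lim f x l -> Dr f x = l.
Proof.
  intro H. unfold Dr.
  assert (Hex : exists l, derivable_pt_lim f x l) by (exists l; exact H).
  pose proof (epsilon_spec (inhabits 0) _ Hex) as Hs.
  eapply uniqueness_limite; eauto.
Qed.

Lemma RInt_pr (f : R -> R) a b (pr : Riemann_integrable f a b) :
  RInt f a b = RiemannInt pr.
Proof.
  unfold RInt. destruct excluded_middle_informative as [H|H].
  - apply RiemannInt_P5.
  - exfalso. apply H. exact (inhabits pr).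
Qed.

Definition contI (f : R -> R) := forall u, 0 <= u <= 1 -> continuity_pt f u.

Lemma contI_int f : contI f -> Riemann_integrable f 0 1.
Proof. intro H. apply continuity_implies_RiemannInt; [lra|exact H]. Qed.

Lemma RInt_lin f g l : contI f -> contI g ->
  RInt (fun x => f x + l * g x) 0 1 = RInt f 0 1 + l * RInt g 0 1.
Proof.
  intros Hf Hg.
  pose proof (contI_int f Hf) as pf. pose proof (contI_int g Hg) as pg.
  rewrite (RInt_pr _ _ _ (RiemannInt_P10 l pf pg)), (RInt_pr _ _ _ pf), (RInt_pr _ _ _ pg).
  apply RiemannInt_P13.
Qed.

Lemma RInt_le f g : contI f -> contI g -> (forall x, 0 <= x <= 1 -> f x <= g x) ->
  RInt f 0 1 <= RInt g 0 1.
Proof.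
  intros Hf Hg H.
  pose proof (contI_int f Hf) as pf. pose proof (contI_int g Hg) as pg.
  rewrite (RInt_pr _ _ _ pf), (RInt_pr _ _ _ pg).
  apply RiemannInt_P19; [lra|]. intros; apply H; lra.
Qed.

Lemma RInt_ext f g : contI f -> contI g -> (forall x, 0 <= x <= 1 -> f x = g x) ->
  RInt f 0 1 = RInt g 0 1.
Proof.
  intros Hf Hg H. apply Rle_antisym; apply RInt_le; auto; intros x Hx; rewrite H; auto; lra.
Qed.

Lemma contI_const c : contI (fun _ => c).
Proof. intros u _. apply continuity_pt_const. intros a b; reflexivity. Qed.

Lemma RInt_const c : RInt (fun _ => c) 0 1 = c.
Proof.
  change (RInt (fct_cte c) 0 1 = c).
  rewrite (RInt_pr _ _ _ (RiemannInt_P14 0 1 c)). rewrite RiemannInt_P15. ring.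
Qed.

Lemma RInt_bound f e : contI f -> (forall x, 0 <= x <= 1 -> Rabs (f x) <= e) ->
  Rabs (RInt f 0 1) <= e.
Proof.
  intros Hf H. apply Rabs_le. split.
  - rewrite <- (RInt_const (-e)). apply RInt_le; auto using contI_const.
    intros x Hx; specialize (H x Hx); revert H; unfold Rabs; destruct Rcase_abs; lra.
  - rewrite <- (RInt_const e). apply RInt_le; auto using contI_const.
    intros x Hx; specialize (H x Hx); revert H; unfold Rabs; destruct Rcase_abs; lra.
Qed.

Lemma contI_plus f g : contI f -> contI g -> contI (fun x => f x + g x).
Proof. intros Hf Hg u Hu. apply continuity_pt_plus; auto. Qed.
Lemma contI_mult f g : contI f -> contI g -> contI (fun x => f x * g x).
Proof. intros Hf Hg u Hu. apply continuity_pt_mult; auto. Qed.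
Lemma contI_scal l g : contI g -> contI (fun x => l * g x).
Proof. intros Hg u Hu. apply continuity_pt_mult; auto. apply continuity_pt_const; intros a b; reflexivity. Qed.
Lemma contI_minus f g : contI f -> contI g -> contI (fun x => f x - g x).
Proof. intros Hf Hg u Hu. apply continuity_pt_minus; auto. Qed.

Lemma UC (w t : R) (F : R -> R -> R) : 0 <= t < w ->
  (forall u, 0 <= u <= 1 -> cont_within w F u t) ->
  forall eps, 0 < eps -> exists del, 0 < del /\
    forall u s, 0 <= u <= 1 -> Rabs (s - t) < del -> 0 <= s < w ->
      Rabs (F u s - F u t) < eps.
Proof.
  intros Ht Hc eps Heps.
  set (P := fun x d => 0 < d /\ forall u' t', Rabs (u' - x) < d -> Rabs (t' - t) < d ->
              0 <= t' < w -> Rabs (F u' t' - F x t) < eps / 2).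
  assert (HP : forall x, 0 <= x <= 1 -> exists d, P x d).
  { intros x Hx. destruct (Hc x Hx (eps/2)) as [d [Hd H]]; [lra|]. exists d. split; auto. }
  set (dl := fun x => epsilon (inhabits 1) (fun d => P x d)).
  assert (Hdl : forall x, 0 <= x <= 1 -> P x (dl x)).
  { intros x Hx. apply (epsilon_spec (inhabits 1) (fun d => P x d)). auto. }
  set (fam := mkfamily (fun x => 0 <= x <= 1) (fun x y => 0 <= x <= 1 /\ Rabs (y - x) < dl x / 2)
                (fun x (H : exists y, 0 <= x <= 1 /\ Rabs (y - x) < dl x / 2) =>
                   match H with ex_intro _ y Hy => proj1 Hy end)).
  assert (Hcov : covering_open_set (fun c => 0 <= c <= 1) fam).
  { split.
    - intros x Hx. exists x. simpl. split; auto. rewrite Rminus_diag, Rabs_R0.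
      destruct (Hdl x Hx). lra.
    - intros x y Hy. simpl in Hy. destruct Hy as [Hx Hy].
      assert (Hr : 0 < dl x / 2 - Rabs (y - x)) by lra.
      exists (mkposreal _ Hr). intros z Hz. unfold disc in Hz. simpl in Hz. simpl. split; auto.
      replace (z - x) with ((z - y) + (y - x)) by ring.
      pose proof (Rabs_triang (z - y) (y - x)). lra. }
  destruct (compact_P3 0 1 fam Hcov) as [D [HcovD [l Hl]]].
  assert (Hm : forall l : list R, (forall x, In x l -> 0 <= x <= 1) ->
            exists m, 0 < m /\ forall x, In x l -> m <= dl x / 2).
  { induction l0 as [|a l0 IH]; intros Hin.
    - exists 1. split; [lra|]. intros x [].
    - destruct IH as [m [Hm1 Hm2]].
      + intros x Hx. apply Hin. right. exact Hx.
      + assert (Ha : 0 <= a <= 1) by (apply Hin; left; auto).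
        destruct (Hdl a Ha) as [Hpa _].
        exists (Rmin m (dl a / 2)). split.
        * apply Rmin_pos; lra.
        * intros x [<-|Hx].
          -- apply Rmin_r.
          -- eapply Rle_trans; [apply Rmin_l|]. auto. }
  destruct (Hm l) as [m [Hm1 Hm2]].
  { intros x Hx. apply Hl in Hx. destruct Hx as [Hx _]. exact Hx. }
  exists m. split; auto.
  intros u s Hu Hs Hsw.
  destruct (HcovD u Hu) as [y [[Hy1 Hy2] HyD]].
  assert (Hyl : In y l) by (apply Hl; split; auto).
  pose proof (Hm2 y Hyl) as Hmy.
  destruct (Hdl y Hy1) as [Hpos Hyp].
  assert (H1 : Rabs (F u s - F y t) < eps / 2) by (apply Hyp; lra).
  assert (H2 : Rabs (F u t - F y t) < eps / 2).
  { apply Hyp; try lra. rewrite Rminus_diag, Rabs_R0. lra. }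
  replace (F u s - F u t) with ((F u s - F y t) - (F u t - F y t)) by ring.
  pose proof (Rabs_triang (F u s - F y t) (- (F u t - F y t))).
  rewrite Rabs_Ropp in H. unfold Rminus at 1. lra.
Qed.

Lemma cont_id x : continuity_pt (fun z => z) x.
Proof. exact (derivable_continuous_pt _ _ (derivable_pt_id x)). Qed.

Lemma cw_const w c u t : cont_within w (fun _ _ => c) u t.
Proof. intros eps He. exists 1. split; [lra|]. intros. rewrite Rminus_diag, Rabs_R0. lra. Qed.

Lemma cw_plus w f g u t : cont_within w f u t -> cont_within w g u t ->
  cont_within w (fun u t => f u t + g u t) u t.
Proof.
  intros Hf Hg eps He.
  destruct (Hf (eps/2)) as [d1 [Hd1 H1]]; [lra|].
  destruct (Hg (eps/2)) as [d2 [Hd2 H2]]; [lra|].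
  exists (Rmin d1 d2). split; [apply Rmin_pos; lra|].
  intros u' t' Hu Ht Hw.
  assert (Hm1 := Rmin_l d1 d2). assert (Hm2 := Rmin_r d1 d2).
  specialize (H1 u' t' ltac:(lra) ltac:(lra) Hw).
  specialize (H2 u' t' ltac:(lra) ltac:(lra) Hw).
  replace (f u' t' + g u' t' - (f u t + g u t)) with ((f u' t' - f u t) + (g u' t' - g u t)) by ring.
  pose proof (Rabs_triang (f u' t' - f u t) (g u' t' - g u t)). lra.
Qed.

Lemma cw_comp w (g : R -> R) f u t : continuity_pt g (f u t) -> cont_within w f u t ->
  cont_within w (fun u t => g (f u t)) u t.
Proof.
  intros Hg Hf eps He.
  destruct (Hg eps He) as [a [Ha H]].
  destruct (Hf a Ha) as [d [Hd H2]].
  exists d. split; auto. intros u' t' Hu Ht Hw.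
  destruct (Req_dec (f u' t') (f u t)) as [E|E].
  - rewrite E, Rminus_diag, Rabs_R0. lra.
  - apply (H (f u' t')). split.
    + unfold D_x, no_cond. split; auto.
    + apply H2; auto.
Qed.

Lemma cw_scal w l f u t : cont_within w f u t -> cont_within w (fun u t => l * f u t) u t.
Proof.
  intro Hf. apply (cw_comp w (fun z => l * z)); auto.
  apply continuity_pt_mult; [apply continuity_pt_const; intros ? ?; reflexivity|apply cont_id].
Qed.

Lemma cw_opp w f u t : cont_within w f u t -> cont_within w (fun u t => - f u t) u t.
Proof.
  intro Hf. apply (cw_comp w (fun z => - z)); auto.
  apply continuity_pt_opp, cont_id.
Qed.

Lemma cw_minus w f g u t : cont_within w f u t -> cont_within w g u t ->
  cont_within w (fun u t => f u t - g u t) u t.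
Proof. intros Hf Hg. apply cw_plus; auto. apply cw_opp; auto. Qed.

Lemma cw_sqr w f u t : cont_within w f u t -> cont_within w (fun u t => f u t * f u t) u t.
Proof.
  intro Hf. apply (cw_comp w (fun z => z * z)); auto.
  apply continuity_pt_mult; apply cont_id.
Qed.

Lemma cw_mult w f g u t : cont_within w f u t -> cont_within w g u t ->
  cont_within w (fun u t => f u t * g u t) u t.
Proof.
  intros Hf Hg.
  assert (E : (fun u t => f u t * g u t) = fun u t =>
     / 4 * ((f u t + g u t) * (f u t + g u t)) + (-/4) * ((f u t - g u t) * (f u t - g u t))).
  { do 2 (apply functional_extensionality; intro). field. }
  rewrite E. apply cw_plus; apply cw_scal; apply cw_sqr.
  - apply cw_plus; auto.
  - apply cw_minus; auto.
Qed.

Lemma cw_inv w f u t : f u t <> 0 -> cont_within w f u t ->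
  cont_within w (fun u t => / f u t) u t.
Proof.
  intros Hn Hf. apply (cw_comp w Rinv); auto.
  apply continuity_pt_inv; [apply cont_id|auto].
Qed.

Lemma cw_div w f g u t : g u t <> 0 -> cont_within w f u t -> cont_within w g u t ->
  cont_within w (fun u t => f u t / g u t) u t.
Proof. intros Hn Hf Hg. unfold Rdiv. apply cw_mult; auto. apply cw_inv; auto. Qed.

Lemma cw_pow w f u t n : cont_within w f u t -> cont_within w (fun u t => f u t ^ n) u t.
Proof.
  intro Hf. apply (cw_comp w (fun z => z ^ n)); auto.
  apply derivable_continuous_pt, derivable_pt_pow.
Qed.

Lemma cw_sqrt w f u t : 0 <= f u t -> cont_within w f u t -> cont_within w (fun u t => sqrt (f u t)) u t.
Proof.
  intros H0 Hf. apply (cw_comp w sqrt); auto. apply continuity_pt_sqrt; auto.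
Qed.

Lemma cw_u w f u t : 0 <= t < w -> cont_within w f u t -> continuity_pt (fun v => f v t) u.
Proof.
  intros Ht Hf eps He. destruct (Hf eps He) as [d [Hd H]].
  exists d. split; auto. intros x [_ Hx]. simpl in *. unfold R_dist in *.
  apply H; auto. rewrite Rminus_diag, Rabs_R0. lra.
Qed.

Lemma mvt_any (f f' : R -> R) w a b : 0 < a < w -> 0 < b < w ->
  (forall c, 0 < c < w -> derivable_pt_lim f c (f' c)) ->
  exists c, f b - f a = f' c * (b - a) /\ Rabs (c - a) <= Rabs (b - a) /\ 0 < c < w.
Proof.
  intros Ha Hb Hd.
  destruct (Rtotal_order a b) as [Hlt|[Heq|Hgt]].
  - destruct (MVT_cor2 f f' a b Hlt) as [c [H1 H2]].
    { intros c Hc. apply Hd. lra. }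
    exists c. split; auto. split; [|lra].
    rewrite !Rabs_right; lra.
  - subst. exists b. split; [ring|]. split; [rewrite Rminus_diag, Rabs_R0; lra|lra].
  - destruct (MVT_cor2 f f' b a Hgt) as [c [H1 H2]].
    { intros c Hc. apply Hd. lra. }
    exists c. split; [lra|]. split; [|lra].
    rewrite !Rabs_left; lra.
Qed.

Lemma RInt_scal f a : contI f -> RInt (fun x => a * f x) 0 1 = a * RInt f 0 1.
Proof.
  intro Hf. transitivity (RInt (fun x => (fun _ => 0) x + a * f x) 0 1).
  - f_equal. apply functional_extensionality; intro; ring.
  - rewrite RInt_lin; auto using contI_const. rewrite RInt_const. ring.
Qed.

Lemma RInt_plus f g : contI f -> contI g -> RInt (fun x => f x + g x) 0 1 = RInt f 0 1 + RInt g 0 1.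
Proof.
  intros Hf Hg. transitivity (RInt (fun x => f x + 1 * g x) 0 1).
  - f_equal. apply functional_extensionality; intro; ring.
  - rewrite RInt_lin; auto. ring.
Qed.

Lemma RInt_minus f g : contI f -> contI g -> RInt (fun x => f x - g x) 0 1 = RInt f 0 1 - RInt g 0 1.
Proof.
  intros Hf Hg. transitivity (RInt (fun x => f x + (-1) * g x) 0 1).
  - f_equal. apply functional_extensionality; intro; ring.
  - rewrite RInt_lin; auto. ring.
Qed.

Lemma leibniz w t (F Ft : R -> R -> R) : 0 < t < w ->
  (forall u s, 0 < s < w -> derivable_pt_lim (fun s => F u s) s (Ft u s)) ->
  (forall u s, 0 < s < w -> continuity_pt (fun v => F v s) u) ->
  (forall u, 0 <= u <= 1 -> cont_within w Ft u t) ->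
  derivable_pt_lim (fun s => RInt (fun u => F u s) 0 1) t (RInt (fun u => Ft u t) 0 1).
Proof.
  intros Ht Hd Hc Hcw eps He.
  destruct (UC w t Ft ltac:(lra) Hcw (eps/2) ltac:(lra)) as [del [Hdel Hu]].
  assert (Hp : 0 < Rmin del (Rmin t (w - t))) by (repeat apply Rmin_pos; lra).
  exists (mkposreal _ Hp). intros h Hh0 Hh. simpl in Hh.
  assert (Hm1 := Rmin_l del (Rmin t (w - t))).
  assert (Hm2 := Rmin_r del (Rmin t (w - t))).
  assert (Hm3 := Rmin_l t (w - t)). assert (Hm4 := Rmin_r t (w - t)).
  assert (Hth : 0 < t + h < w) by (revert Hh; unfold Rabs; destruct Rcase_abs; lra).
  assert (C1 : contI (fun u => F u (t + h))) by (intros u _; apply Hc; lra).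
  assert (C2 : contI (fun u => F u t)) by (intros u _; apply Hc; lra).
  assert (C3 : contI (fun u => Ft u t)) by (intros u Hu'; apply (cw_u w); [lra|auto]).
  set (g := fun u => / h * F u (t + h) + (- / h) * F u t + (-1) * Ft u t).
  assert (Cg : contI g).
  { unfold g. apply contI_plus; [apply contI_plus|]; apply contI_scal; auto. }
  assert (E : (RInt (fun u => F u (t + h)) 0 1 - RInt (fun u => F u t) 0 1) / h
              - RInt (fun u => Ft u t) 0 1 = RInt g 0 1).
  { unfold g. rewrite RInt_plus; [|apply contI_plus; apply contI_scal; auto|apply contI_scal; auto].
    rewrite RInt_plus by (apply contI_scal; auto).
    rewrite !RInt_scal by auto. field. auto. }
  rewrite E.
  apply Rle_lt_trans with (eps / 2); [|lra].
  apply RInt_bound; auto.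
  intros u Hu'.
  destruct (mvt_any (fun s => F u s) (fun s => Ft u s) w t (t + h) ltac:(lra) Hth)
    as [c [Hc1 [Hc2 Hc3]]].
  { intros c Hc'. apply Hd; auto. }
  assert (Eg : g u = Ft u c - Ft u t).
  { unfold g. replace (t + h - t) with h in Hc1 by ring.
    simpl in Hc1.
    replace (/ h * F u (t + h) + - / h * F u t) with ((F u (t + h) - F u t) / h) by (field; auto).
    rewrite Hc1. field; auto. }
  rewrite Eg. left. apply Hu; auto; try lra.
  replace (t + h - t) with h in Hc2 by ring. lra.
Qed.

Lemma int_cont w t (F : R -> R -> R) : 0 <= t < w ->
  (forall u, 0 <= u <= 1 -> cont_within w F u t) ->
  (forall u s, 0 <= s < w -> continuity_pt (fun v => F v s) u) ->
  forall eps, 0 < eps -> exists del, 0 < del /\ forall s, Rabs (s - t) < del -> 0 <= s < w ->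
    Rabs (RInt (fun u => F u s) 0 1 - RInt (fun u => F u t) 0 1) < eps.
Proof.
  intros Ht Hcw Hc eps He.
  destruct (UC w t F Ht Hcw (eps/2) ltac:(lra)) as [del [Hdel Hu]].
  exists del. split; auto. intros s Hs Hsw.
  rewrite <- RInt_minus by (intros u _; apply Hc; lra).
  apply Rle_lt_trans with (eps/2); [|lra].
  apply RInt_bound.
  - apply contI_minus; intros u _; apply Hc; lra.
  - intros u Hu'. left. apply Hu; auto.
Qed.

Lemma ftc (H Hd : R -> R) : (forall u, derivable_pt_lim H u (Hd u)) ->
  (forall u, continuity_pt Hd u) -> RInt Hd 0 1 = H 1 - H 0.
Proof.
  intros Hder Hc.
  set (d0 := (fun x => exist (fun l => derivable_pt_abs H x l) (Hd x) (Hder x)) : derivable H).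
  assert (Hc' : continuity (derive H d0)) by exact Hc.
  set (C := @mkC1 H d0 Hc').
  assert (pr : Riemann_integrable (derive C (diff0 C)) 0 1).
  { apply continuity_implies_RiemannInt; [lra|]. intros; apply (cont1 C). }
  pose proof (@FTC_Riemann C 0 1 pr) as E.
  change (RInt (derive C (diff0 C)) 0 1 = C 1 - C 0).
  rewrite (RInt_pr _ _ _ pr). exact E.
Qed.

Lemma RInt_4 f1 f2 f3 f4 a1 a2 a3 a4 : contI f1 -> contI f2 -> contI f3 -> contI f4 ->
  RInt (fun x => a1 * f1 x + a2 * f2 x + a3 * f3 x + a4 * f4 x) 0 1 =
  a1 * RInt f1 0 1 + a2 * RInt f2 0 1 + a3 * RInt f3 0 1 + a4 * RInt f4 0 1.
Proof.
  intros C1 C2 C3 C4.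
  rewrite RInt_plus; [|repeat apply contI_plus; apply contI_scal; auto|apply contI_scal; auto].
  rewrite RInt_plus; [|repeat apply contI_plus; apply contI_scal; auto|apply contI_scal; auto].
  rewrite RInt_plus; [|apply contI_scal; auto|apply contI_scal; auto].
  rewrite !RInt_scal; auto.
Qed.

Lemma cheb g k m : contI g -> contI k -> contI m -> (forall u, 0 <= u <= 1 -> 0 <= m u) ->
  (forall u v, 0 <= u <= 1 -> 0 <= v <= 1 -> 0 <= (g u - g v) * (k u - k v)) ->
  RInt (fun u => g u * m u) 0 1 * RInt (fun u => k u * m u) 0 1 <=
  RInt (fun u => g u * k u * m u) 0 1 * RInt m 0 1.
Proof.
  intros Cg Ck Cm Hm Hs.
  set (A := RInt (fun u => g u * k u * m u) 0 1).
  set (B := RInt (fun u => k u * m u) 0 1).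
  set (C := RInt (fun u => g u * m u) 0 1).
  set (D := RInt m 0 1).
  assert (Cgkm : contI (fun u => g u * k u * m u)) by (repeat apply contI_mult; auto).
  assert (Ckm : contI (fun u => k u * m u)) by (repeat apply contI_mult; auto).
  assert (Cgm : contI (fun u => g u * m u)) by (repeat apply contI_mult; auto).
  assert (Hv : forall v, 0 <= v <= 1 -> 0 <= m v * (A - g v * B - k v * C + g v * k v * D)).
  { intros v Hv. apply Rmult_le_pos; [auto|].
    assert (E : RInt (fun u => (g u - g v) * (k u - k v) * m u) 0 1 =
                A - g v * B - k v * C + g v * k v * D).
    { transitivity (RInt (fun u => 1 * (g u * k u * m u) + (- g v) * (k u * m u)
                       + (- k v) * (g u * m u) + (g v * k v) * m u) 0 1).
      - f_equal. apply functional_extensionality; intro; ring.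
      - rewrite RInt_4; auto. unfold A, B, C, D. ring. }
    rewrite <- E. apply Rle_trans with (RInt (fun _ => 0) 0 1); [rewrite RInt_const; lra|]. apply RInt_le; auto using contI_const.
    - repeat apply contI_mult; auto; apply contI_minus; auto using contI_const.
    - intros u Hu. apply Rmult_le_pos; auto. }
  assert (E2 : RInt (fun v => m v * (A - g v * B - k v * C + g v * k v * D)) 0 1 =
               2 * (A * D - B * C)).
  { transitivity (RInt (fun v => A * m v + (- B) * (g v * m v) + (- C) * (k v * m v) + D * (g v * k v * m v)) 0 1).
    - f_equal. apply functional_extensionality; intro; ring.
    - rewrite RInt_4; auto. fold A B C D. ring. }
  assert (0 <= 2 * (A * D - B * C)).
  { rewrite <- E2. apply Rle_trans with (RInt (fun _ => 0) 0 1); [rewrite RInt_const; lra|]. apply RInt_le; auto using contI_const.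
    - apply contI_mult; auto. apply contI_plus; [apply contI_minus; [apply contI_minus|]|];
      try apply contI_mult; auto using contI_const; try apply contI_mult; auto using contI_const.
    }
  nra.
Qed.

Lemma final (w : R) (L A K2 P Q2 : R -> R) :
  0 < w ->
  (forall t, 0 < t < w -> derivable_pt_lim L t (- Q2 t)) ->
  (forall t, 0 < t < w -> derivable_pt_lim A t (- P t)) ->
  (forall t, 0 < t < w -> 0 < L t) ->
  (forall t, 0 < t < w -> 0 < P t) ->
  (forall t, 0 < t < w -> P t * K2 t <= Q2 t * (2 * PI)) ->
  limit1_in A (fun t => 0 <= t < w) 0 w ->
  liminf_left_le (fun t => L t * (K2 t - PI * L t / A t)) w 0.
Proof.
  intros Hw HL HA HLp HPp Hch Hlim.
  unfold limit1_in, limit_in in Hlim. simpl in Hlim. unfold R_dist in Hlim.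
  assert (Hdec : forall s t, 0 < s < w -> 0 < t < w -> s < t -> A t < A s).
  { intros s t Hs Ht Hst.
    destruct (MVT_cor2 A (fun c => - P c) s t Hst) as [c [Hc1 Hc2]].
    { intros c Hc. apply HA. lra. }
    assert (0 < P c) by (apply HPp; lra). nra. }
  assert (Hpos : forall t, 0 < t < w -> 0 < A t).
  { intros t Ht. set (t' := (t + w) / 2).
    assert (Ht' : 0 < t' < w) by (unfold t'; lra).
    assert (H1 : A t' < A t) by (apply Hdec; unfold t' in *; lra).
    destruct (Rlt_or_le (A t') 0) as [Hn|Hn]; [|lra].
    exfalso. destruct (Hlim (- A t') ltac:(lra)) as [alp [Halp H]].
    set (s := (Rmax t' (w - alp / 2) + w) / 2).
    assert (Hm1 := Rmax_l t' (w - alp / 2)). assert (Hm2 := Rmax_r t' (w - alp / 2)).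
    assert (Hmw : Rmax t' (w - alp / 2) < w) by (apply Rmax_lub_lt; lra).
    assert (Hs : t' < s < w) by (unfold s; lra).
    assert (Hs2 : A s < A t') by (apply Hdec; lra).
    specialize (H s). rewrite Rminus_0_r in H.
    assert (Rabs (A s) < - A t').
    { apply H. split; [lra|]. rewrite Rabs_left; unfold s; lra. }
    rewrite Rabs_left in H0; lra. }
  intros eps del Heps Hdel.
  apply NNPP. intro Hno.
  assert (Hge : forall t, 0 <= t < w -> w - del < t ->
             eps <= L t * (K2 t - PI * L t / A t)).
  { intros t Ht1 Ht2. apply Rnot_lt_le. intro Hlt. apply Hno. exists t.
    split; auto. split; auto. lra. }
  set (t1 := (Rmax (w - del) 0 + w) / 2).
  assert (Hm1 := Rmax_l (w - del) 0). assert (Hm2 := Rmax_r (w - del) 0).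
  assert (Hmw : Rmax (w - del) 0 < w) by (apply Rmax_lub_lt; lra).
  assert (Ht1 : 0 < t1 < w /\ w - del < t1) by (unfold t1; lra).
  set (Phi := fun t => L t * L t / A t - eps / PI * ln (A t)).
  set (Phid := fun t => ((2 * L t * (- Q2 t)) * A t - L t * L t * (- P t)) / (A t * A t)
                        - eps / PI * ((- P t) / A t)).
  assert (HPI := PI_RGT_0).
  assert (HdPhi : forall t, 0 < t < w -> derivable_pt_lim Phi t (Phid t)).
  { intros t Ht. unfold Phi, Phid.
    assert (HAt := Hpos t Ht).
    apply (derivable_pt_lim_minus (fun t => L t * L t / A t) (fun t => eps / PI * ln (A t))).
    - replace ((2 * L t * - Q2 t * A t - L t * L t * - P t) / (A t * A t))
        with (((- Q2 t * L t + L t * - Q2 t) * A t - - P t * (L t * L t)) / (A t)²)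
        by (unfold Rsqr; field; lra).
      apply (derivable_pt_lim_div (fun t => L t * L t) A); [apply (derivable_pt_lim_mult L L)| |]; auto; lra.
    - apply (derivable_pt_lim_scal (fun t => ln (A t))).
      replace (- P t / A t) with (/ A t * (- P t)) by (field; lra).
      apply (derivable_pt_lim_comp A ln); auto.
      apply derivable_pt_lim_ln; auto. }
  assert (Hneg : forall t, t1 <= t < w -> Phid t <= 0).
  { intros t Ht.
    assert (Ht0 : 0 < t < w) by lra.
    specialize (Hge t ltac:(lra) ltac:(lra)).
    pose proof (Hpos t Ht0) as Ha. pose proof (HPp t Ht0) as Hp. pose proof (HLp t Ht0) as Hl.
    pose proof (Hch t Ht0) as Hc.
    unfold Phid.
    set (a := A t) in *. set (l := L t) in *. set (p := P t) in *. set (q := Q2 t) in *.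
    set (k := K2 t) in *.
    assert (E : (2 * l * - q * a - l * l * - p) / (a * a) - eps / PI * (- p / a) =
                (l / (a * a)) * (- 2 * a * q + l * p) + eps * p / (PI * a)) by (field; lra).
    rewrite E.
    assert (Hq : - 2 * a * q <= - a * p * k / PI).
    { assert (a * (p * k) <= a * (q * (2 * PI))) by (apply Rmult_le_compat_l; lra).
      replace (- a * p * k / PI) with (-2 * a * q + (a * (q * (2 * PI)) - a * (p * k)) / PI) by (field; lra).
      assert (0 <= (a * (q * (2 * PI)) - a * (p * k)) / PI).
      { apply Rmult_le_pos; [lra|]. apply Rlt_le, Rinv_0_lt_compat; lra. }
      lra. }
    assert (E2 : l / (a * a) * (- a * p * k / PI + l * p) + eps * p / (PI * a) =
                 p / (PI * a) * (eps - l * (k - PI * l / a))) by (field; lra).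
    apply Rle_trans with (l / (a * a) * (- a * p * k / PI + l * p) + eps * p / (PI * a)).
    - apply Rplus_le_compat_r. apply Rmult_le_compat_l.
      + apply Rlt_le, Rdiv_lt_0_compat; nra.
      + lra.
    - rewrite E2. assert (0 <= p / (PI * a)) by (apply Rlt_le, Rdiv_lt_0_compat; nra). nra. }
  assert (Hmono : forall t, t1 < t < w -> Phi t <= Phi t1).
  { intros t Ht.
    destruct (MVT_cor2 Phi Phid t1 t ltac:(lra)) as [c [Hc1 Hc2]].
    { intros c Hc. apply HdPhi. lra. }
    assert (Phid c <= 0) by (apply Hneg; lra). nra. }
  set (m := exp (- Phi t1 * PI / eps)).
  assert (Hmpos : 0 < m) by apply exp_pos.
  assert (Hbig : forall t, t1 < t < w -> m < A t).
  { intros t Ht. pose proof (Hmono t Ht) as H. unfold Phi in H at 1.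
    assert (Ht0 : 0 < t < w) by lra.
    pose proof (Hpos t Ht0) as Ha. pose proof (HLp t Ht0) as Hl.
    assert (0 < L t * L t / A t) by (apply Rdiv_lt_0_compat; nra).
    assert (Hln : - Phi t1 * PI / eps < ln (A t)).
    { apply Rmult_lt_reg_r with (eps / PI). apply Rdiv_lt_0_compat; lra.
      replace (- Phi t1 * PI / eps * (eps / PI)) with (- Phi t1) by (field; lra). lra. }
    unfold m. rewrite <- (exp_ln (A t)) by lra. apply exp_increasing. exact Hln. }
  destruct (Hlim m Hmpos) as [alp [Halp H]].
  set (s := (Rmax t1 (w - alp / 2) + w) / 2).
  assert (Hn1 := Rmax_l t1 (w - alp / 2)). assert (Hn2 := Rmax_r t1 (w - alp / 2)).
  assert (Hnw : Rmax t1 (w - alp / 2) < w) by (apply Rmax_lub_lt; lra).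
  assert (Hs : t1 < s < w) by (unfold s; lra).
  specialize (H s). rewrite Rminus_0_r in H.
  assert (Rabs (A s) < m).
  { apply H. split; [lra|]. rewrite Rabs_left; unfold s; lra. }
  pose proof (Hbig s Hs). rewrite Rabs_right in H0; lra.
Qed.

Lemma dl_eq f x l1 l2 : derivable_pt_lim f x l1 -> l1 = l2 -> derivable_pt_lim f x l2.
Proof. intros H ->; exact H. Qed.
Lemma dl_ext f g x l : derivable_pt_lim f x l -> (forall y, f y = g y) -> derivable_pt_lim g x l.
Proof. intros H E. replace g with f; auto. apply functional_extensionality; auto. Qed.
Lemma dl_plus f g x lf lg : derivable_pt_lim f x lf -> derivable_pt_lim g x lg ->
  derivable_pt_lim (fun y => f y + g y) x (lf + lg).
Proof. intros; apply (derivable_pt_lim_plus f g); auto. Qed.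
Lemma dl_minus f g x lf lg : derivable_pt_lim f x lf -> derivable_pt_lim g x lg ->
  derivable_pt_lim (fun y => f y - g y) x (lf - lg).
Proof. intros; apply (derivable_pt_lim_minus f g); auto. Qed.
Lemma dl_mult f g x lf lg : derivable_pt_lim f x lf -> derivable_pt_lim g x lg ->
  derivable_pt_lim (fun y => f y * g y) x (lf * g x + f x * lg).
Proof. intros; apply (derivable_pt_lim_mult f g); auto. Qed.
Lemma dl_opp f x lf : derivable_pt_lim f x lf -> derivable_pt_lim (fun y => - f y) x (- lf).
Proof. intros; apply (derivable_pt_lim_opp f); auto. Qed.
Lemma dl_const c x : derivable_pt_lim (fun _ => c) x 0.
Proof. apply (derivable_pt_lim_const c). Qed.
Lemma dl_comp (g : R -> R) f x lf lg : derivable_pt_lim f x lf -> derivable_pt_lim g (f x) lg ->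
  derivable_pt_lim (fun y => g (f y)) x (lg * lf).
Proof. intros; apply (derivable_pt_lim_comp f g); auto. Qed.
Lemma dl_div f g x lf lg : derivable_pt_lim f x lf -> derivable_pt_lim g x lg -> g x <> 0 ->
  derivable_pt_lim (fun y => f y / g y) x ((lf * g x - lg * f x) / (g x * g x)).
Proof. intros. apply (derivable_pt_lim_div f g); auto. Qed.
Lemma dl_pow f x lf n : derivable_pt_lim f x lf ->
  derivable_pt_lim (fun y => f y ^ n) x (INR n * f x ^ pred n * lf).
Proof. intros H. apply (dl_comp (fun z => z ^ n) f); auto. apply derivable_pt_lim_pow. Qed.
Lemma dl_sqrt f x lf : 0 < f x -> derivable_pt_lim f x lf ->
  derivable_pt_lim (fun y => sqrt (f y)) x (/ (2 * sqrt (f x)) * lf).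
Proof. intros Hp H. apply (dl_comp sqrt f); auto. apply derivable_pt_lim_sqrt; auto. Qed.

Lemma dl_loc f g x l w : 0 < x < w -> (forall s, 0 < s < w -> f s = g s) ->
  derivable_pt_lim f x l -> derivable_pt_lim g x l.
Proof.
  intros Hx E H eps He. destruct (H eps He) as [d Hd].
  assert (Hp : 0 < Rmin d (Rmin x (w - x))) by (repeat apply Rmin_pos; try lra; apply cond_pos).
  exists (mkposreal _ Hp). intros h Hh0 Hh. simpl in Hh.
  assert (Hm1 := Rmin_l d (Rmin x (w - x))). assert (Hm2 := Rmin_r d (Rmin x (w - x))).
  assert (Hm3 := Rmin_l x (w - x)). assert (Hm4 := Rmin_r x (w - x)).
  assert (Hxh : 0 < x + h < w) by (revert Hh; unfold Rabs; destruct Rcase_abs; lra).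
  rewrite <- !E by lra. apply Hd; auto. lra.
Qed.

Lemma dt_lim w f t l : 0 < t < w -> dt_within w f t l -> derivable_pt_lim f t l.
Proof.
  intros Ht H eps He. destruct (H eps He) as [d [Hd H2]].
  assert (Hp : 0 < Rmin d (Rmin t (w - t))) by (repeat apply Rmin_pos; lra).
  exists (mkposreal _ Hp). intros h Hh0 Hh. simpl in Hh.
  assert (Hm1 := Rmin_l d (Rmin t (w - t))). assert (Hm2 := Rmin_r d (Rmin t (w - t))).
  assert (Hm3 := Rmin_l t (w - t)). assert (Hm4 := Rmin_r t (w - t)).
  apply H2; auto; [lra|]. revert Hh; unfold Rabs; destruct Rcase_abs; lra.
Qed.

Section SF.
Variables (w : R) (f : R -> R -> R) (D : nat -> nat -> R -> R -> R).
Hypothesis H0 : forall u t, 0 <= t < w -> D 0%nat 0%nat u t = f u t.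
Hypothesis Hu : forall i j u t, 0 <= t < w ->
        derivable_pt_lim (fun v => D i j v t) u (D (S i) j u t).
Hypothesis Ht : forall i j u t, 0 <= t < w ->
        dt_within w (fun s => D i j u s) t (D i (S j) u t).

Lemma SF_u1 u t : 0 <= t < w -> Dr (fun v => f v t) u = D 1%nat 0%nat u t.
Proof.
  intro Ht'. apply Dr_eq. apply (dl_ext (fun v => D 0%nat 0%nat v t)); auto.
Qed.

Lemma SF_u2 u t : 0 <= t < w -> Dr (fun v => Dr (fun v' => f v' t) v) u = D 2%nat 0%nat u t.
Proof.
  intro Ht'. apply Dr_eq. apply (dl_ext (fun v => D 1%nat 0%nat v t)); auto.
  intro y. symmetry. apply SF_u1; auto.
Qed.

Lemma SF_t i j u t : 0 < t < w -> derivable_pt_lim (fun s => D i j u s) t (D i (S j) u t).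
Proof. intro Ht'. apply (dt_lim w); auto. apply Ht. lra. Qed.

Lemma SF_t1 u t : 0 < t < w -> Dr (fun s => f u s) t = D 0%nat 1%nat u t.
Proof.
  intro Ht'. apply Dr_eq. apply (dl_loc (fun s => D 0%nat 0%nat u s) _ _ _ w); auto.
  - intros s Hs; apply H0; lra.
  - apply SF_t; auto.
Qed.

Hypothesis Hper : forall u t, 0 <= t < w -> f (u + 1) t = f u t.

Lemma per_deriv (g : R -> R) x l : (forall v, g (v + 1) = g v) ->
  derivable_pt_lim g (x + 1) l -> derivable_pt_lim g x l.
Proof.
  intros Hg H eps He. destruct (H eps He) as [d Hd]. exists d. intros h Hh0 Hh.
  specialize (Hd h Hh0 Hh). rewrite <- (Hg x), <- (Hg (x + h)).
  replace (x + h + 1) with (x + 1 + h) by ring. exact Hd.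
Qed.

Lemma SF_per : forall i j u t, 0 < t < w -> D i j (u + 1) t = D i j u t.
Proof.
  assert (Hj : forall i j, (forall u t, 0 < t < w -> D i j (u + 1) t = D i j u t) ->
                 forall u t, 0 < t < w -> D i (S j) (u + 1) t = D i (S j) u t).
  { intros i j IH u t Htw. eapply uniqueness_limite.
    - apply SF_t; auto.
    - apply (dl_loc (fun s => D i j u s) _ _ _ w); auto.
      + intros s Hs. symmetry. apply IH; auto.
      + apply SF_t; auto. }
  assert (Hi : forall i j, (forall u t, 0 < t < w -> D i j (u + 1) t = D i j u t) ->
                 forall u t, 0 < t < w -> D (S i) j (u + 1) t = D (S i) j u t).
  { intros i j IH u t Htw. apply (uniqueness_limite (fun v => D i j v t) u).
    - apply per_deriv.
      + intro v. apply IH; auto.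
      + apply Hu; lra.
    - apply Hu; lra. }
  intros i. induction i as [|i IHi].
  - intros j. induction j as [|j IHj].
    + intros u t Htw. rewrite !H0 by lra. apply Hper; lra.
    + apply Hj; auto.
  - intros j. apply Hi. apply IHi.
Qed.
End SF.

Section Geo.
Variables (G G1 : R -> R) (w : R) (gx gy : R -> R -> R) (Dx Dy : nat -> nat -> R -> R -> R).
Hypothesis Hw : 0 < w.
Hypothesis Hx0 : forall u t, 0 <= t < w -> Dx 0%nat 0%nat u t = gx u t.
Hypothesis Hxu : forall i j u t, 0 <= t < w ->
        derivable_pt_lim (fun v => Dx i j v t) u (Dx (S i) j u t).
Hypothesis Hxt : forall i j u t, 0 <= t < w ->
        dt_within w (fun s => Dx i j u s) t (Dx i (S j) u t).
Hypothesis Hxc : forall i j u t, 0 <= t < w -> cont_within w (Dx i j) u t.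
Hypothesis Hy0 : forall u t, 0 <= t < w -> Dy 0%nat 0%nat u t = gy u t.
Hypothesis Hyu : forall i j u t, 0 <= t < w ->
        derivable_pt_lim (fun v => Dy i j v t) u (Dy (S i) j u t).
Hypothesis Hyt : forall i j u t, 0 <= t < w ->
        dt_within w (fun s => Dy i j u s) t (Dy i (S j) u t).
Hypothesis Hyc : forall i j u t, 0 <= t < w -> cont_within w (Dy i j) u t.
Hypothesis Hper : forall u t, 0 <= t < w -> gx (u + 1) t = gx u t /\ gy (u + 1) t = gy u t.
Hypothesis Hsp : forall u t, 0 <= t < w -> 0 < speed gx gy u t.
Hypothesis Hk : forall u t, 0 <= t < w -> 0 < curv gx gy u t.
Hypothesis Hpde : forall u t, 0 < t < w ->
     xt gx u t = G (curv gx gy u t) * curv gx gy u t * Nx gx gy u t /\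
     yt gy u t = G (curv gx gy u t) * curv gx gy u t * Ny gx gy u t.
Hypothesis HG : forall x, 0 < x -> derivable_pt_lim G x (G1 x) /\ 0 < G x /\ 0 <= G1 x.

Definition a u t := Dx 1%nat 0%nat u t.
Definition b u t := Dy 1%nat 0%nat u t.
Definition a1 u t := Dx 2%nat 0%nat u t.
Definition b1 u t := Dy 2%nat 0%nat u t.
Definition Q u t := a u t ^ 2 + b u t ^ 2.
Definition Sp u t := sqrt (Q u t).
Definition K u t := (a u t * b1 u t - b u t * a1 u t) / Sp u t ^ 3.

Lemma speed_eq u t : 0 <= t < w -> speed gx gy u t = Sp u t.
Proof.
  intro Ht. unfold speed, xu, yu, Sp, Q, a, b.
  rewrite (SF_u1 w gx Dx), (SF_u1 w gy Dy); auto.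
Qed.

Lemma curv_eq u t : 0 <= t < w -> curv gx gy u t = K u t.
Proof.
  intro Ht. unfold curv, K. rewrite speed_eq by auto. unfold xuu, yuu, xu, yu.
  rewrite (SF_u1 w gx Dx), (SF_u1 w gy Dy), (SF_u2 w gx Dx), (SF_u2 w gy Dy); auto.
Qed.

Lemma Sp_pos u t : 0 <= t < w -> 0 < Sp u t.
Proof. intro Ht. rewrite <- speed_eq; auto. Qed.
Lemma K_pos u t : 0 <= t < w -> 0 < K u t.
Proof. intro Ht. rewrite <- curv_eq; auto. Qed.
Lemma Q_Sp u t : Q u t = Sp u t * Sp u t.
Proof. unfold Sp. rewrite sqrt_sqrt; auto. unfold Q. nra. Qed.
Lemma Q_pos u t : 0 <= t < w -> 0 < Q u t.
Proof. intro Ht. rewrite Q_Sp. pose proof (Sp_pos u t Ht). nra. Qed.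

Lemma cw_a u t : 0 <= t < w -> cont_within w a u t. Proof. intro; apply Hxc; auto. Qed.
Lemma cw_b u t : 0 <= t < w -> cont_within w b u t. Proof. intro; apply Hyc; auto. Qed.
Lemma cw_a1 u t : 0 <= t < w -> cont_within w a1 u t. Proof. intro; apply Hxc; auto. Qed.
Lemma cw_b1 u t : 0 <= t < w -> cont_within w b1 u t. Proof. intro; apply Hyc; auto. Qed.
Lemma cw_Q u t : 0 <= t < w -> cont_within w Q u t.
Proof. intro. unfold Q. apply cw_plus; apply cw_pow; [apply cw_a|apply cw_b]; auto. Qed.
Lemma cw_Sp u t : 0 <= t < w -> cont_within w Sp u t.
Proof. intro. unfold Sp. apply cw_sqrt; [left; apply Q_pos; auto|apply cw_Q; auto]. Qed.
Lemma cw_K u t : 0 <= t < w -> cont_within w K u t.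
Proof.
  intro. unfold K. apply cw_div.
  - pose proof (Sp_pos u t H). apply pow_nonzero. lra.
  - apply cw_minus; apply cw_mult; auto using cw_a, cw_b, cw_a1, cw_b1.
  - apply cw_pow, cw_Sp; auto.
Qed.
Lemma cw_GK u t : 0 <= t < w -> cont_within w (fun u t => G (K u t)) u t.
Proof.
  intro. apply (cw_comp w G K); [|apply cw_K; auto].
  destruct (HG (K u t) (K_pos u t H)) as [Hd _].
  apply derivable_continuous_pt. exists (G1 (K u t)). exact Hd.
Qed.

Definition phi u t := G (K u t) * K u t / Sp u t.

Lemma xt_eq u t : 0 < t < w -> Dx 0%nat 1%nat u t = - phi u t * b u t.
Proof.
  intro Ht. rewrite <- (SF_t1 w gx Dx) by auto. fold (xt gx u t).
  destruct (Hpde u t Ht) as [E _]. rewrite E. unfold Nx, yu.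
  rewrite curv_eq, speed_eq, (SF_u1 w gy Dy) by (auto; lra).
  unfold phi, b. pose proof (Sp_pos u t ltac:(lra)). field. lra.
Qed.

Lemma yt_eq u t : 0 < t < w -> Dy 0%nat 1%nat u t = phi u t * a u t.
Proof.
  intro Ht. rewrite <- (SF_t1 w gy Dy) by auto. fold (yt gy u t).
  destruct (Hpde u t Ht) as [_ E]. rewrite E. unfold Ny, xu.
  rewrite curv_eq, speed_eq, (SF_u1 w gx Dx) by (auto; lra).
  unfold phi, a. pose proof (Sp_pos u t ltac:(lra)). field. lra.
Qed.

Lemma Q_der u t : 0 <= t < w -> exists l, derivable_pt_lim (fun v => Q v t) u l.
Proof.
  intro Ht. eexists. unfold Q. apply dl_plus; apply dl_pow; [apply Hxu|apply Hyu]; auto.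
Qed.

Lemma Sp_der u t : 0 <= t < w -> exists l, derivable_pt_lim (fun v => Sp v t) u l.
Proof.
  intro Ht. destruct (Q_der u t Ht) as [l Hl]. eexists. unfold Sp.
  apply dl_sqrt; [apply Q_pos; auto | exact Hl].
Qed.

Lemma K_der u t : 0 <= t < w -> exists l, derivable_pt_lim (fun v => K v t) u l.
Proof.
  intro Ht. destruct (Sp_der u t Ht) as [l Hl]. eexists. unfold K.
  apply dl_div.
  - apply dl_minus; apply dl_mult; first [apply Hxu | apply Hyu]; auto.
  - apply dl_pow; eauto.
  - pose proof (Sp_pos u t Ht). apply pow_nonzero; lra.
Qed.

Lemma phi_der u t : 0 <= t < w -> exists l, derivable_pt_lim (fun v => phi v t) u l.
Proof.
  intro Ht. destruct (Sp_der u t Ht) as [l Hl]. destruct (K_der u t Ht) as [k Hk'].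
  eexists. unfold phi.
  apply dl_div.
  - apply dl_mult; [|eauto]. apply (dl_comp G (fun v => K v t)); eauto.
    apply HG. apply K_pos; auto.
  - eauto.
  - pose proof (Sp_pos u t Ht). lra.
Qed.

Lemma Dx11_eq u t l : 0 < t < w -> derivable_pt_lim (fun v => phi v t) u l ->
  Dx 1%nat 1%nat u t = - (l * b u t + phi u t * b1 u t).
Proof.
  intros Ht Hl. apply (uniqueness_limite (fun v => Dx 0%nat 1%nat v t) u).
  - apply Hxu; lra.
  - apply (dl_ext (fun v => - phi v t * b v t)).
    + eapply dl_eq. apply dl_mult. apply dl_opp. exact Hl. apply Hyu; lra. unfold b1; ring.
    + intro y. symmetry. apply xt_eq; auto.
Qed.

Lemma Dy11_eq u t l : 0 < t < w -> derivable_pt_lim (fun v => phi v t) u l ->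
  Dy 1%nat 1%nat u t = l * a u t + phi u t * a1 u t.
Proof.
  intros Ht Hl. apply (uniqueness_limite (fun v => Dy 0%nat 1%nat v t) u).
  - apply Hyu; lra.
  - apply (dl_ext (fun v => phi v t * a v t)).
    + eapply dl_eq. apply dl_mult. exact Hl. apply Hxu; lra. unfold a1; ring.
    + intro y. symmetry. apply yt_eq; auto.
Qed.

Lemma L_integrand u t : 0 < t < w ->
  (a u t * Dx 1%nat 1%nat u t + b u t * Dy 1%nat 1%nat u t) / Sp u t =
  - (G (K u t) * K u t ^ 2 * Sp u t).
Proof.
  intro Ht. destruct (phi_der u t ltac:(lra)) as [l Hl].
  rewrite (Dx11_eq u t l), (Dy11_eq u t l) by auto.
  pose proof (Sp_pos u t ltac:(lra)).
  unfold phi, K. field. lra.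
Qed.

Lemma A_integrand u t : 0 < t < w ->
  b u t * Dx 0%nat 1%nat u t - a u t * Dy 0%nat 1%nat u t = - (G (K u t) * K u t * Sp u t).
Proof.
  intro Ht. rewrite xt_eq, yt_eq by auto.
  pose proof (Sp_pos u t ltac:(lra)).
  unfold phi. replace (b u t * (- (G (K u t) * K u t / Sp u t) * b u t) -
     a u t * (G (K u t) * K u t / Sp u t * a u t)) with (- (G (K u t) * K u t / Sp u t) * Q u t)
     by (unfold Q; ring).
  rewrite Q_Sp. field. lra.
Qed.

Definition F_A u s := Dx 0%nat 0%nat u s * b u s - Dy 0%nat 0%nat u s * a u s.
Definition Ft_A u s := Dx 0%nat 1%nat u s * b u s + Dx 0%nat 0%nat u s * Dy 1%nat 1%nat u s
   - (Dy 0%nat 1%nat u s * a u s + Dy 0%nat 0%nat u s * Dx 1%nat 1%nat u s).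
Definition N u s := a u s * b1 u s - b u s * a1 u s.
Definition F_T u s := N u s / Q u s.
Definition Ft_T u s := ((Dx 1%nat 1%nat u s * b1 u s + a u s * Dy 2%nat 1%nat u s
   - (Dy 1%nat 1%nat u s * a1 u s + b u s * Dx 2%nat 1%nat u s)) * Q u s
   - (2 * a u s * Dx 1%nat 1%nat u s + 2 * b u s * Dy 1%nat 1%nat u s) * N u s) / (Q u s * Q u s).
Definition Ft_L u s := (a u s * Dx 1%nat 1%nat u s + b u s * Dy 1%nat 1%nat u s) / Sp u s.

Lemma length_eq s : 0 <= s < w -> length gx gy s = RInt (fun u => Sp u s) 0 1.
Proof.
  intro Hs. unfold length. f_equal. apply functional_extensionality. intro u. apply speed_eq; auto.
Qed.

Lemma area_eq s : 0 <= s < w -> area gx gy s = / 2 * RInt (fun u => F_A u s) 0 1.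
Proof.
  intro Hs. unfold area. f_equal. f_equal. apply functional_extensionality. intro u.
  unfold F_A, xu, yu. rewrite (SF_u1 w gx Dx), (SF_u1 w gy Dy), Hx0, Hy0 by auto. reflexivity.
Qed.

Lemma T_eq s : 0 <= s < w ->
  RInt (fun u => curv gx gy u s * speed gx gy u s) 0 1 = RInt (fun u => F_T u s) 0 1.
Proof.
  intro Hs. f_equal. apply functional_extensionality. intro u.
  rewrite curv_eq, speed_eq by auto. unfold K, F_T, N. rewrite Q_Sp.
  pose proof (Sp_pos u s Hs). field. lra.
Qed.

Lemma k2_eq s : 0 <= s < w -> int_k2 gx gy s = RInt (fun u => K u s ^ 2 * Sp u s) 0 1.
Proof.
  intro Hs. unfold int_k2. f_equal. apply functional_extensionality. intro u.
  rewrite curv_eq, speed_eq by auto. reflexivity.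
Qed.

Lemma Dxt i j u s : 0 < s < w -> derivable_pt_lim (fun s => Dx i j u s) s (Dx i (S j) u s).
Proof. intro Hs. apply (dt_lim w); [auto|apply Hxt; lra]. Qed.
Lemma Dyt i j u s : 0 < s < w -> derivable_pt_lim (fun s => Dy i j u s) s (Dy i (S j) u s).
Proof. intro Hs. apply (dt_lim w); [auto|apply Hyt; lra]. Qed.

Lemma Sp_t u s : 0 < s < w -> derivable_pt_lim (fun s => Sp u s) s (Ft_L u s).
Proof.
  intro Hs. pose proof (Sp_pos u s ltac:(lra)).
  eapply dl_eq.
  - unfold Sp. apply dl_sqrt; [apply Q_pos; lra|]. unfold Q.
    apply dl_plus; apply dl_pow; [apply Dxt|apply Dyt]; auto.
  - unfold Ft_L. fold (Q u s) (Sp u s). unfold a, b. simpl. field. lra.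
Qed.

Lemma F_A_t u s : 0 < s < w -> derivable_pt_lim (fun s => F_A u s) s (Ft_A u s).
Proof.
  intro Hs. eapply dl_eq.
  - unfold F_A, a, b. apply dl_minus; apply dl_mult; first [apply Dxt|apply Dyt]; auto.
  - unfold Ft_A, a, b. ring.
Qed.

Lemma F_T_t u s : 0 < s < w -> derivable_pt_lim (fun s => F_T u s) s (Ft_T u s).
Proof.
  intro Hs. pose proof (Q_pos u s ltac:(lra)).
  eapply dl_eq.
  - unfold F_T, N, Q, a, b, a1, b1. apply dl_div.
    + apply dl_minus; apply dl_mult; first [apply Dxt|apply Dyt]; auto.
    + apply dl_plus; apply dl_pow; first [apply Dxt|apply Dyt]; auto.
    + fold (a u s) (b u s) (Q u s). lra.
  - unfold Ft_T, N, Q, a, b, a1, b1. simpl. field.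
    fold (a u s) (b u s). unfold Q in H. nra.
Qed.

Ltac cwt := repeat first
  [ apply cw_minus | apply cw_plus | apply cw_opp | apply cw_mult | apply Hxc | apply Hyc
  | apply cw_a | apply cw_b | apply cw_a1 | apply cw_b1 | apply cw_Q | apply cw_Sp
  | apply cw_K | apply cw_GK | apply cw_const ]; auto.

Lemma cw_FA u t : 0 <= t < w -> cont_within w F_A u t.
Proof. intro. unfold F_A. cwt. Qed.
Lemma cw_FtA u t : 0 <= t < w -> cont_within w Ft_A u t.
Proof. intro. unfold Ft_A. cwt. Qed.
Lemma cw_N u t : 0 <= t < w -> cont_within w N u t.
Proof. intro. unfold N. cwt. Qed.
Lemma cw_FT u t : 0 <= t < w -> cont_within w F_T u t.
Proof. intro. unfold F_T. apply cw_div; [pose proof (Q_pos u t H); lra|apply cw_N; auto|apply cw_Q; auto]. Qed.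
Lemma cw_FtT u t : 0 <= t < w -> cont_within w Ft_T u t.
Proof.
  intro. unfold Ft_T. apply cw_div.
  - pose proof (Q_pos u t H). nra.
  - apply cw_minus; apply cw_mult; cwt.
  - cwt.
Qed.
Lemma cw_FtL u t : 0 <= t < w -> cont_within w Ft_L u t.
Proof.
  intro. unfold Ft_L. apply cw_div; [pose proof (Sp_pos u t H); lra| |]; cwt.
Qed.
Lemma cw_P u t : 0 <= t < w -> cont_within w (fun u t => G (K u t) * K u t * Sp u t) u t.
Proof. intro. apply cw_mult; [apply cw_mult; [apply cw_GK | apply cw_K] | apply cw_Sp]; auto. Qed.
Lemma cw_Q2 u t : 0 <= t < w -> cont_within w (fun u t => G (K u t) * K u t ^ 2 * Sp u t) u t.
Proof. intro. apply cw_mult; [apply cw_mult; [apply cw_GK | apply cw_pow, cw_K] | apply cw_Sp]; auto. Qed.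
Lemma cw_K2 u t : 0 <= t < w -> cont_within w (fun u t => K u t ^ 2 * Sp u t) u t.
Proof. intro. apply cw_mult; [apply cw_pow, cw_K | apply cw_Sp]; auto. Qed.

Lemma ctI (F : R -> R -> R) t : 0 <= t < w -> (forall u, 0 <= t < w -> cont_within w F u t) ->
  contI (fun u => F u t).
Proof. intros Ht H u _. apply (cw_u w); auto. Qed.

Lemma perx i j u t : 0 < t < w -> Dx i j (u + 1) t = Dx i j u t.
Proof. intro. apply (SF_per w gx Dx); auto. intros; apply Hper; auto. Qed.
Lemma pery i j u t : 0 < t < w -> Dy i j (u + 1) t = Dy i j u t.
Proof. intro. apply (SF_per w gy Dy); auto. intros; apply Hper; auto. Qed.

Lemma intA t : 0 < t < w ->
  RInt (fun u => Ft_A u t) 0 1 = -2 * RInt (fun u => G (K u t) * K u t * Sp u t) 0 1.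
Proof.
  intro Ht. assert (Ht' : 0 <= t < w) by lra.
  set (HA := fun v => Dx 0%nat 0%nat v t * Dy 0%nat 1%nat v t - Dy 0%nat 0%nat v t * Dx 0%nat 1%nat v t).
  set (Hd := fun v => a v t * Dy 0%nat 1%nat v t + Dx 0%nat 0%nat v t * Dy 1%nat 1%nat v t
                      - (b v t * Dx 0%nat 1%nat v t + Dy 0%nat 0%nat v t * Dx 1%nat 1%nat v t)).
  assert (Hder : forall v, derivable_pt_lim HA v (Hd v)).
  { intro v. eapply dl_eq.
    - unfold HA. apply dl_minus; apply dl_mult; first [apply Hxu|apply Hyu]; auto.
    - unfold Hd, a, b. ring. }
  assert (Hc : forall v, continuity_pt Hd v).
  { intro v. apply (cw_u w (fun v t => a v t * Dy 0%nat 1%nat v t + Dx 0%nat 0%nat v t * Dy 1%nat 1%nat v t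
                      - (b v t * Dx 0%nat 1%nat v t + Dy 0%nat 0%nat v t * Dx 1%nat 1%nat v t)) v t); auto.
    cwt. }
  pose proof (ftc HA Hd Hder Hc) as E.
  assert (E0 : HA 1 - HA 0 = 0).
  { unfold HA. replace 1 with (0 + 1) by ring. rewrite !perx, !pery by auto. ring. }
  assert (Ef : (fun u => Ft_A u t) = fun u => (-2) * (G (K u t) * K u t * Sp u t) + Hd u).
  { apply functional_extensionality. intro u. 
    replace (-2 * (G (K u t) * K u t * Sp u t)) with (2 * (- (G (K u t) * K u t * Sp u t))) by ring.
    rewrite <- (A_integrand u t Ht). unfold Ft_A, Hd. ring. }
  rewrite Ef, RInt_plus, RInt_scal, E, E0.
  - ring.
  - apply (ctI (fun u t => G (K u t) * K u t * Sp u t)); auto using cw_P.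
  - apply contI_scal. apply (ctI (fun u t => G (K u t) * K u t * Sp u t)); auto using cw_P.
  - intros v _. auto.
Qed.

Lemma intT t : 0 < t < w -> RInt (fun u => Ft_T u t) 0 1 = 0.
Proof.
  intro Ht. assert (Ht' : 0 <= t < w) by lra.
  set (HT := fun v => (a v t * Dy 1%nat 1%nat v t - b v t * Dx 1%nat 1%nat v t) / Q v t).
  assert (Hder : forall v, derivable_pt_lim HT v (Ft_T v t)).
  { intro v. pose proof (Q_pos v t Ht'). eapply dl_eq.
    - unfold HT, Q, a, b. apply dl_div.
      + apply dl_minus; apply dl_mult; first [apply Hxu|apply Hyu]; auto.
      + apply dl_plus; apply dl_pow; first [apply Hxu|apply Hyu]; auto.
      + fold (a v t) (b v t) (Q v t). lra.
    - unfold Ft_T, N, Q, a, b, a1, b1. simpl. field.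
      fold (a v t) (b v t). unfold Q in H. nra. }
  assert (Hc : forall v, continuity_pt (fun v => Ft_T v t) v).
  { intro v. apply (cw_u w Ft_T v t); auto. apply cw_FtT; auto. }
  rewrite (ftc HT _ Hder Hc). unfold HT, Q, a, b.
  replace 1 with (0 + 1) by ring. rewrite !perx, !pery by auto. ring.
Qed.

Lemma G_mono x y : 0 < x -> x <= y -> G x <= G y.
Proof.
  intros Hx Hxy. destruct (Req_dec x y) as [->|Hne]; [lra|].
  destruct (MVT_cor2 G G1 x y ltac:(lra)) as [c [Hc1 Hc2]].
  { intros c Hc. apply HG. lra. }
  destruct (HG c ltac:(lra)) as [_ [_ Hg]]. nra.
Qed.

Lemma main_geo :
  RInt (fun u => curv gx gy u 0 * speed gx gy u 0) 0 1 = 2 * PI ->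
  limit1_in (area gx gy) (fun t => 0 <= t < w) 0 w ->
  liminf_left_le
    (fun t => length gx gy t * (int_k2 gx gy t - PI * length gx gy t / area gx gy t)) w 0.
Proof.
  intros Hinit HAl.
  set (P := fun t => RInt (fun u => G (K u t) * K u t * Sp u t) 0 1).
  set (Q2 := fun t => RInt (fun u => G (K u t) * K u t ^ 2 * Sp u t) 0 1).
  assert (cP : forall t, 0 <= t < w -> contI (fun u => G (K u t) * K u t * Sp u t)).
  { intros t Ht. apply (ctI (fun u t => G (K u t) * K u t * Sp u t)); auto using cw_P. }
  assert (cQ2 : forall t, 0 <= t < w -> contI (fun u => G (K u t) * K u t ^ 2 * Sp u t)).
  { intros t Ht. apply (ctI (fun u t => G (K u t) * K u t ^ 2 * Sp u t)); auto using cw_Q2. }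
  set (Tf := fun s => RInt (fun u => F_T u s) 0 1).
  assert (Tder : forall s, 0 < s < w -> derivable_pt_lim Tf s 0).
  { intros s Hs. eapply dl_eq.
    - apply (leibniz w s F_T Ft_T); auto.
      + intros u s' Hs'. apply F_T_t; auto.
      + intros u s' Hs'. apply (cw_u w F_T u s'); [lra|]. apply cw_FT; lra.
      + intros u _. apply cw_FtT; lra.
    - apply intT; auto. }
  assert (T0 : Tf 0 = 2 * PI) by (unfold Tf; rewrite <- T_eq; auto; lra).
  assert (T2 : forall t, 0 < t < w -> Tf t = 2 * PI).
  { intros t Ht.
    assert (Hz : forall eps, 0 < eps -> Rabs (Tf t - 2 * PI) < eps).
    { intros eps He.
      destruct (int_cont w 0 F_T ltac:(lra)) with (eps := eps) as [del [Hdel Hc]]; auto.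
      - intros u _. apply cw_FT; lra.
      - intros u s' Hs'. apply (cw_u w F_T u s'); auto. apply cw_FT; auto.
      - assert (Hs1 := Rmin_l (del / 2) t). assert (Hs2 := Rmin_r (del / 2) t).
        assert (Hs3 : 0 < Rmin (del / 2) t) by (apply Rmin_pos; lra).
        remember (Rmin (del / 2) t) as s eqn:Es.
        destruct (mvt_any Tf (fun _ => 0) w s t ltac:(lra) Ht Tder) as [c [Ec _]].
        assert (E : Tf t = Tf s) by lra. rewrite E, <- T0.
        apply Hc; [rewrite Rminus_0_r, Rabs_right; lra | lra]. }
    destruct (Req_dec (Tf t - 2 * PI) 0) as [E|E]; [lra|].
    exfalso. specialize (Hz (Rabs (Tf t - 2 * PI)) (Rabs_pos_lt _ E)). lra. }
  apply (final w (length gx gy) (area gx gy) (int_k2 gx gy) P Q2); auto.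
  - intros t Ht. apply (dl_loc (fun s => RInt (fun u => Sp u s) 0 1) _ _ _ w); auto.
    + intros s Hs. symmetry. apply length_eq. lra.
    + eapply dl_eq.
      * apply (leibniz w t (fun u s => Sp u s) Ft_L); auto.
        -- intros u s Hs. apply Sp_t; auto.
        -- intros u s Hs. apply (cw_u w Sp u s); [lra|]. apply cw_Sp; lra.
        -- intros u _. apply cw_FtL; lra.
      * unfold Q2. replace (- RInt (fun u => G (K u t) * K u t ^ 2 * Sp u t) 0 1) with
          (-1 * RInt (fun u => G (K u t) * K u t ^ 2 * Sp u t) 0 1) by ring.
        rewrite <- RInt_scal by (apply cQ2; lra).
        f_equal. apply functional_extensionality. intro u. unfold Ft_L.
        rewrite L_integrand; auto. ring.
  - intros t Ht. apply (dl_loc (fun s => / 2 * RInt (fun u => F_A u s) 0 1) _ _ _ w); auto.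
    + intros s Hs. symmetry. apply area_eq. lra.
    + eapply dl_eq.
      * apply (dl_mult (fun _ => / 2) (fun s => RInt (fun u => F_A u s) 0 1)).
        -- apply dl_const.
        -- apply (leibniz w t F_A Ft_A); auto.
           ++ intros u s Hs. apply F_A_t; auto.
           ++ intros u s Hs. apply (cw_u w F_A u s); [lra|]. apply cw_FA; lra.
           ++ intros u _. apply cw_FtA; lra.
      * rewrite intA by auto. unfold P. lra.
  - intros t Ht. rewrite length_eq by lra.
    destruct (continuity_ab_min (fun u => Sp u t) 0 1 ltac:(lra)) as [mx [Hmx1 Hmx2]].
    { intros c Hc. apply (cw_u w Sp c t); [lra|]. apply cw_Sp; lra. }
    apply Rlt_le_trans with (RInt (fun _ => Sp mx t) 0 1).
    + rewrite RInt_const. apply Sp_pos; lra.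
    + apply RInt_le; auto using contI_const.
      intros c Hc. apply (cw_u w Sp c t); [lra|]. apply cw_Sp; lra.
  - intros t Ht. unfold P.
    destruct (continuity_ab_min (fun u => G (K u t) * K u t * Sp u t) 0 1 ltac:(lra)) as [mx [Hmx1 Hmx2]].
    { apply cP; lra. }
    apply Rlt_le_trans with (RInt (fun _ => G (K mx t) * K mx t * Sp mx t) 0 1).
    + rewrite RInt_const. assert (Ht' : 0 <= t < w) by lra.
      pose proof (K_pos mx t Ht'). pose proof (Sp_pos mx t Ht').
      destruct (HG (K mx t) H) as [_ [Hg _]].
      apply Rmult_lt_0_compat; [apply Rmult_lt_0_compat|]; auto.
    + apply RInt_le; auto using contI_const. apply cP; lra.
  - intros t Ht. assert (Ht' : 0 <= t < w) by lra.
    assert (cK : contI (fun u => K u t)) by (apply (ctI K); auto using cw_K).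
    assert (cS : contI (fun u => Sp u t)) by (apply (ctI Sp); auto using cw_Sp).
    assert (cG : contI (fun u => G (K u t))) by (apply (ctI (fun u t => G (K u t))); auto using cw_GK).
    pose proof (cheb (fun u => G (K u t)) (fun u => K u t) (fun u => K u t * Sp u t)
                  cG cK (contI_mult _ _ cK cS)) as Hc.
    assert (E1 : (fun u => G (K u t) * (K u t * Sp u t)) = (fun u => G (K u t) * K u t * Sp u t))
      by (apply functional_extensionality; intro; ring).
    assert (E2 : (fun u => K u t * (K u t * Sp u t)) = (fun u => K u t ^ 2 * Sp u t))
      by (apply functional_extensionality; intro; ring).
    assert (E3 : (fun u => G (K u t) * K u t * (K u t * Sp u t)) = (fun u => G (K u t) * K u t ^ 2 * Sp u t))
      by (apply functional_extensionality; intro; ring).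
    assert (E4 : (fun u => K u t * Sp u t) = (fun u => F_T u t)).
    { apply functional_extensionality; intro u. unfold F_T, K, N. rewrite Q_Sp.
      pose proof (Sp_pos u t Ht'). field. lra. }
    cbv beta in Hc. rewrite E1, E2, E3, E4 in Hc. fold (Tf t) in Hc. rewrite T2 in Hc by auto.
    unfold P, Q2. rewrite k2_eq by auto. apply Hc.
    + intros u Hu. pose proof (K_pos u t Ht'). pose proof (Sp_pos u t Ht'). nra.
    + intros u v Hu Hv. pose proof (K_pos u t Ht'). pose proof (K_pos v t Ht').
      destruct (Rle_dec (K u t) (K v t)) as [Hle|Hle].
      * pose proof (G_mono (K u t) (K v t) H Hle). nra.
      * pose proof (G_mono (K v t) (K u t) H0 ltac:(lra)). nra.
Qed.
End Geo.


Theorem lemma2p11 (G : R -> R) (w : R) (gx gy : R -> R -> R)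
  (HG : H1 G)
  (Hsol : is_solution G w gx gy)
  (Hmax : maximal_solution G w gx gy)
  (Hinit : initial_strictly_convex gx gy)
  (HA : limit1_in (area gx gy) (fun t => 0 <= t < w) 0 w) :
  liminf_left_le
    (fun t => length gx gy t * (int_k2 gx gy t - PI * length gx gy t / area gx gy t))
    w 0.
Proof.
  destruct HG as [G1 [G2 [G3 HG]]].
  destruct Hsol as [Hw [[Dx [Hx0 [Hxu [Hxt Hxc]]]] [[Dy [Hy0 [Hyu [Hyt Hyc]]]] [Hper [Hsp [Hk Hpde]]]]]].
  destruct Hinit as [_ Hinit].
  apply (main_geo G G1 w gx gy Dx Dy); auto.
  intros x Hx. destruct (HG x Hx) as [H1' [_ [_ [_ [H5 H6]]]]]. auto.
Qed.
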